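(* Let $\mu>0$ and let $g:[0,1]\to\mathbb{R}$ be a function such that $t\mapsto t^{\mu}g(t)$ is integrable on $[0,1]$. For integers $n\ge 0$ define the function $$\varphi_{n}(y)=\int_{0}^{1} t^{\mu}\,U_{n-1}\bigl(y-(1+y)t\bigr)\,g(t)\,\mathrm{d}t ,$$ where $U_k$ denotes the Chebyshev polynomial of the second kind of degree $k$ and $U_{-1}\equiv 0$ (so each $\varphi_n$ is a polynomial in $y$ of degree at most $n-1$). Then for every $n\ge 2$, $$\left((1+y)\frac{\mathrm{d}}{\mathrm{d} y} - n\right)\varphi_{n+1}(y) = \left((1+y)\frac{\mathrm{d}}{\mathrm{d} y} + n\right)\varphi_{n-1}(y) + 2n\,\varphi_n(y).$$
   Context: In the paper, $g=g_j$ is any one of the functions $g_1,\dots,g_r$ appearing in a separable approximation $G(y,t)\approx\sum_{j=1}^r\sigma_j f_j(y)g_j(t)$, and the statement is asserted for all $j$; the statement above is for an arbitrary such function $g$. $U_n$ is the Chebyshev polynomial of the second kind, with the convention $U_{-1}=0$. *)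

(* Defs.v *)
From HB Require Import structures.
From mathcomp Require Import all_boot all_order all_algebra.
From mathcomp Require Import all_classical all_reals all_analysis.
Set Implicit Arguments. Unset Strict Implicit. Unset Printing Implicit Defensive.
Import Order.TTheory GRing.Theory Num.Theory.
Import numFieldNormedType.Exports.
Local Open Scope classical_set_scope.
Local Open Scope ring_scope.

Fixpoint chebU {R : ringType} (k : nat) (x : R) : R :=
  match k with
  | 0 => 1
  | 1 => 2 * x
  | (k'.+1 as k1).+1 => 2 * x * chebU k1 x - chebU k' x
  end.

Definition chebU_pred {R : ringType} (n : nat) (x : R) : R :=
  match n with 0 => 0 | m.+1 => chebU m x end.

Definition phi {R : realType} (mu : R) (g : R -> R) (n : nat) (y : R) : R :=
  \int[lebesgue_measure]_(t in `[0, 1]%classic)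
     (t `^ mu * chebU_pred n (y - (1 + y) * t) * g t).

(* Main.v *)
Require Import Defs.
From HB Require Import structures.
From mathcomp Require Import all_boot all_order all_algebra.
From mathcomp Require Import all_classical all_reals all_analysis.
From mathcomp Require Import ring lra zify.
Import Order.TTheory GRing.Theory Num.Theory.
Import numFieldNormedType.Exports.
Local Open Scope classical_set_scope.
Local Open Scope ring_scope.

Section P.
Variable R : realType.

Fixpoint Vp (m : nat) : {poly R} :=
  match m with
  | 0 => 0
  | 1 => 1
  | (k.+1 as k1).+1 => 'X * Vp k1 *+ 2 - Vp k
  end.

Lemma VpSS k : Vp k.+2 = 'X * Vp k.+1 *+ 2 - Vp k.
Proof. by []. Qed.

Lemma chebU_predE m x : chebU_pred m x = (Vp m).[x].
Proof.
suff : chebU_pred m x = (Vp m).[x] /\ chebU_pred m.+1 x = (Vp m.+1).[x] by case.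
elim: m => [|m [ih1 ih2]].
  by rewrite /= !hornerE.
split => //.
rewrite VpSS !hornerE -ih1 -ih2.
case: m {ih1 ih2} => [|m]; first by rewrite /= !hornerE; ring.
change (chebU_pred m.+3 x) with (chebU m.+2 x).
change (chebU_pred m.+2 x) with (chebU m.+1 x).
change (chebU_pred m.+1 x) with (chebU m x).
change (chebU m.+2 x) with (2 * x * chebU m.+1 x - chebU m x).
ring.
Qed.

Lemma Vp_derivS k : (Vp k.+2)^`() = Vp k.+1 *+ 2 + 'X * (Vp k.+1)^`() *+ 2 - (Vp k)^`().
Proof. rewrite VpSS derivB derivMn derivM derivX mul1r; ring. Qed.

Lemma Vp_deriv k : (Vp k.+2)^`() - (Vp k)^`() = Vp k.+1 *+ (2 * k.+1).
Proof.
elim/ltn_ind: k => -[|[|k]] ih.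
- by rewrite Vp_derivS /= deriv0 derivC mulr0 mul0rn !subr0 addr0.
- rewrite Vp_derivS (Vp_derivS 0) !VpSS; change (Vp 1) with (1 : {poly R}); change (Vp 0) with (0 : {poly R}); rewrite deriv0 derivC; ring.
have A := Vp_derivS k.+2.
have B := Vp_derivS k.
have C := ih k.+1 (ltnSn _).
have D := ih k (ltnW (ltnSn _)).
have E := VpSS k.+1.
move: A B C D E.
set V4 := Vp k.+4; set V3 := Vp k.+3; set V2 := Vp k.+2; set V1 := Vp k.+1; set V0 := Vp k.
move=> A B C D E; clearbody V4 V3 V2 V1 V0.
apply/eqP; rewrite -subr_eq0; apply/eqP.
have -> : V4^`() - V2^`() - V3 *+ (2 * k.+3) =
   (V4^`() - (V3 *+ 2 + 'X * V3^`() *+ 2 - V2^`())) + 'X *+ 2 * (V3^`() - V1^`() - V2 *+ (2 * k.+2))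
   - (V2^`() - (V1 *+ 2 + 'X * V1^`() *+ 2 - V0^`())) - (V2^`() - V0^`() - V1 *+ (2 * k.+1))
   - (V3 - ('X * V2 *+ 2 - V1)) *+ (2 * k.+2).
  ring.
move/eqP: A; rewrite -subr_eq0 => /eqP ->.
move/eqP: B; rewrite -subr_eq0 => /eqP ->.
move/eqP: C; rewrite -subr_eq0 => /eqP ->.
move/eqP: D; rewrite -subr_eq0 => /eqP ->.
move/eqP: E; rewrite -subr_eq0 => /eqP ->.
ring.
Qed.

Definition Wp m := Vp m \Po ('X - 1%:P).

Lemma Wp_key n : (1 <= n)%N ->
  'X * (Wp n.+1)^`() - Wp n.+1 *+ n =
  'X * (Wp n.-1)^`() + Wp n.-1 *+ n + Wp n *+ (2 * n).
Proof.
case: n => [//|k] _.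
have D : (Wp k.+2)^`() - (Wp k)^`() = Wp k.+1 *+ (2 * k.+1).
  rewrite /Wp !deriv_comp derivXsubC !mulr1 -comp_polyB Vp_deriv.
  by rewrite raddfMn.
have S : Wp k.+2 + Wp k = ('X - 1%:P) * Wp k.+1 *+ 2.
  by rewrite /Wp VpSS comp_polyB raddfMn /= subrK comp_polyM comp_polyX.
change (k.+1.-1) with k.
move: D S.
set A := Wp k.+2; set B := Wp k; set C := Wp k.+1 => D S.
have -> : 'X * B^`() = 'X * A^`() - 'X * (A^`() - B^`()) by ring.
rewrite D.
apply/eqP; rewrite -subr_eq0; apply/eqP.
apply: etrans (_ : _ = ((('X - 1%:P) * C *+ 2) - (A + B)) *+ k.+1) _; first ring.
by rewrite S subrr mul0rn.
Qed.

End P.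

Arguments Vp {R}. Arguments Wp {R}.
Section A.
Variable R : realType.
Notation mu := (@lebesgue_measure R).
Let D := `[(0:R), 1]%classic.
Let mD : measurable D. Proof. exact: measurable_itv. Qed.

Lemma Rint_sum N (F : nat -> R -> R) :
  (forall i, mu.-integrable D (EFin \o F i)) ->
  mu.-integrable D (EFin \o (fun x => \sum_(i < N) F i x)) /\
  \int[mu]_(x in D) (\sum_(i < N) F i x) = \sum_(i < N) \int[mu]_(x in D) F i x.
Proof.
move=> hF; elim: N => [|N [ih1 ih2]].
  split.
    apply: (@eq_integrable _ _ _ mu D mD (cst 0%E)); last exact: integrable0.
    by move=> x _ /=; rewrite big_ord0.
  rewrite big_ord0 (@eq_Rintegral _ _ _ mu D (fun=> 0)); last by move=> x _; rewrite big_ord0.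
  by rewrite Rintegral_cst // mul0r.
have hi : mu.-integrable D ((EFin \o (fun x => \sum_(i < N) F i x)) \+ (EFin \o F N)).
  exact: integrableD.
split.
  apply: (@eq_integrable _ _ _ mu D mD _ _ _ hi).
  by move=> x _ /=; rewrite big_ord_recr.
rewrite [RHS]big_ord_recr /= -ih2 -RintegralD //.
by apply: eq_Rintegral => x _; rewrite big_ord_recr.
Qed.


Variables (a : R) (g : R -> R).
Hypothesis hint : mu.-integrable `[0, 1]%classic (fun t : R => (t `^ a * g t)%:E).

Definition fi (i : nat) (t : R) := (1 - t) ^+ i * (t `^ a * g t).

Lemma fi_int i : mu.-integrable D (EFin \o fi i).
Proof.
have h : mu.-integrable D (fun t => (((1 - t) ^+ i)%:E * (t `^ a * g t)%:E)%E).
  apply: integrableMr => //.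
    apply: measurable_realfun.measurable_funX; apply: measurable_realfun.measurable_funB => //.
  exists 1; split; first exact: num_real.
  move=> M M1 t /=; rewrite /D /= in_itv /= => /andP[t0 t1].
  rewrite normrX (le_trans _ (ltW M1)) // exprn_ile1 //.
  by rewrite ger0_norm ?subr_ge0 //; lra.
apply: (@eq_integrable _ _ _ mu D mD _ _ _ h).
by move=> t _ /=; rewrite /fi EFinM.
Qed.


Lemma fiZ_int c i : mu.-integrable D (EFin \o (fun t => c * fi i t)).
Proof.
have h := @integrableZl _ _ _ mu D ltac:(exact: measurable_itv) c _ (fi_int i).
apply: (@eq_integrable _ _ _ mu D mD _ _ _ h).
by move=> t _ /=; rewrite EFinM.
Qed.

Definition Mi i := \int[mu]_(t in D) fi i t.
Definition Lp N (p : {poly R}) := \poly_(i < N) (p`_i * Mi i).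

Lemma phi_expand N m y : (size (@Wp R m) <= N)%N -> phi a g m y = (Lp N (Wp m)).[1 + y].
Proof.
move=> hs; rewrite /phi horner_poly.
transitivity (\int[mu]_(t in D) \sum_(i < N) ((Wp m)`_i * (1 + y) ^+ i) * fi i t).
  apply: eq_Rintegral => t _; rewrite chebU_predE.
  have -> : (Vp m).[y - (1 + y) * t] = (Wp m).[(1 + y) * (1 - t)].
    by rewrite /Wp horner_comp !hornerE; congr (horner _ _); ring.
  rewrite (horner_coef_wide _ hs) mulr_sumr mulr_suml; apply: eq_bigr => i _.
  rewrite /fi exprMn; ring.
have [_ ->] := Rint_sum N (fun i t => ((Wp m)`_i * (1 + y) ^+ i) * fi i t)
  (fun i => fiZ_int _ i).
apply: eq_bigr => i _; rewrite RintegralZl //; last exact: fi_int.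
rewrite /Mi; ring.
Qed.


Lemma Lp_XD N p : 'X * (Lp N p)^`() = Lp N ('X * p^`()).
Proof.
apply/polyP => i; rewrite coefXM /Lp [in RHS]coef_poly coefXM.
case: i => [|j] /=; first by case: ifP => //; rewrite mul0r.
rewrite !coef_deriv coef_poly.
by case: ifP => _; rewrite ?mul0rn // mulrnAl.
Qed.

Lemma phi_fun N m : (size (@Wp R m) <= N)%N ->
  phi a g m = horner (Lp N (Wp m) \Po (1%:P + 'X)).
Proof.
move=> hs; apply/funext => y; rewrite (phi_expand _ _ y hs) horner_comp.
by rewrite hornerD hornerC hornerX.
Qed.

Lemma derive_phi N m y : (size (@Wp R m) <= N)%N ->
  derive1 (phi a g m) y = (Lp N (Wp m))^`().[1 + y].
Proof.
move=> hs; rewrite (phi_fun _ _ hs) -derivE deriv_comp derivD derivC derivX add0r mulr1.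
by rewrite horner_comp hornerD hornerC hornerX.
Qed.

Lemma key N n : (1 <= n)%N ->
  Lp N ('X * (@Wp R n.+1)^`()) - Lp N (Wp n.+1) *+ n =
  Lp N ('X * (Wp n.-1)^`()) + Lp N (Wp n.-1) *+ n + Lp N (Wp n) *+ (2 * n).
Proof.
move=> hn; have K := @Wp_key R n hn.
apply/polyP => i; rewrite !(coefD, coefB, coefN, coefMn) /Lp !coef_poly.
case: ifP => _; last by rewrite !mul0rn oppr0 !addr0.
have Ki := congr1 (fun p : {poly R} => p`_i) K.
rewrite /= !(coefD, coefB, coefN, coefMn) in Ki.
by rewrite -!mulrnAl -mulNr -mulrDl -!mulrDl Ki.
Qed.

End A.

Theorem theorem2p2 (R : realType) (mu : R) (g : R -> R) (hmu : 0 < mu)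
  (hint : lebesgue_measure.-integrable `[0, 1]%classic
            (fun t : R => (t `^ mu * g t)%:E))
  (n : nat) (hn : (2 <= n)%N) (y : R) :
  (1 + y) * derive1 (phi mu g n.+1) y - n%:R * phi mu g n.+1 y =
  (1 + y) * derive1 (phi mu g n.-1) y + n%:R * phi mu g n.-1 y
  + 2 * n%:R * phi mu g n y.
Proof.
set N := (size (@Wp R n.+1) + size (@Wp R n) + size (@Wp R n.-1))%N.
have h1 : (size (@Wp R n.+1) <= N)%N by rewrite /N; lia.
have h2 : (size (@Wp R n) <= N)%N by rewrite /N; lia.
have h3 : (size (@Wp R n.-1) <= N)%N by rewrite /N; lia.
rewrite (@derive_phi R mu g hint _ _ y h1) (@derive_phi R mu g hint _ _ y h3).
rewrite (@phi_expand R mu g hint _ _ y h1) (@phi_expand R mu g hint _ _ y h2) (@phi_expand R mu g hint _ _ y h3).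
have H := congr1 (fun p => p.[1 + y]) (@key R mu g N n (ltnW hn)).
rewrite /= -!Lp_XD !(hornerD, hornerN, hornerMn, hornerM, hornerX) in H.
apply/eqP; rewrite -subr_eq0; apply/eqP; move/eqP: H; rewrite -subr_eq0 => /eqP H.
rewrite -H; ring.
Qed.
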